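(* Let $H$ be a $k$-uniform hypergraph and $d$ a positive integer. The toric ideal $I_H$ is generated in degree at most $d$ if and only if for every primitive monomial walk $\mathcal W$ of length $2n>2d$ with $\operatorname{supp}(\mathcal W)\subseteq E(H)$, one of the following two conditions holds: (i) there exists a proper splitting set $S$ of $\mathcal W$; or (ii) there is a finite sequence of pairs $(S_1,R_1),\dots,(S_N,R_N)$ of multisets of edges such that - $S_1$ and $R_1$ are, respectively, a blue splitting set and a red splitting set of $\mathcal W$, each of size less than $n$, with decompositions $(\Gamma_{1,1},S_1,\Gamma_{2,1})$ and $(\Upsilon_{1,1},R_1,\Upsilon_{2,1})$ respectively; - for each $1\le i<N$, $S_{i+1}$ and $R_{i+1}$ are, respectively, a blue splitting set and a red splitting set of $\mathcal W_i$, each of size less than $n$, with decompositions $(\Gamma_{1,i+1},S_{i+1},\Gamma_{2,i+1})$ and $(\Upsilon_{1,i+1},R_{i+1},\Upsilon_{2,i+1})$ respectively, where for each $i$, $\mathcal W_i$ denotes the bicolored multiset whose blue part is $(\Gamma_{2,i})_{blue}$ and whose red part is $(\Upsilon_{1,i})_{red}$; - $S_N\cap R_N\neq\emptyset$, or there exists a proper splitting set of $\mathcal W_N$.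
   Context: A hypergraph $H$ has vertex set $V=\{1,\dots,m\}$ and a set $E(H)$ of edges, each a nonempty subset of $V$ (no repeated edges); it is $k$-uniform if every edge has exactly $k$ elements. For a field $K$, the toric ideal $I_H$ is the kernel of $\phi_H: K[t_e : e\in E(H)]\to K[x_1,\dots,x_m]$, $t_e\mapsto\prod_{j\in e}x_j$; ''generated in degree at most $d$'' means $I_H$ is generated by its elements of degree at most $d$. Multisets of edges: $|M|$ is the size counted with multiplicity (the ''size'' of $M$); $\operatorname{supp}(M)$ is the set of distinct elements; $M_1\sqcup M_2$ adds multiplicities; $M_1\cap M_2$ takes minimum multiplicities; $M_2\subseteq M_1$ is multiplicity-wise containment, and $M_2$ is a proper submultiset of $M_1$ if moreover $M_2\neq M_1$. A balanced edge set $\mathcal E$ is a pair of finite multisets $\mathcal E_{blue},\mathcal E_{red}$ of edges of $H$ such that every vertex lies in the same number of blue as red edges, counted with multiplicity; $\operatorname{supp}(\mathcal E)=\operatorname{supp}(\mathcal E_{blue}\sqcup\mathcal E_{red})$, and its length/size is $|\mathcal E|=|\mathcal E_{blue}|+|\mathcal E_{red}|$. For uniform $H$, balanced edge sets are called monomial walks. A balanced edge set $\mathcal E$ is primitive if there is no other balanced edge set $\mathcal E'$ with $\mathcal E'_{blue}\subsetneq\mathcal E_{blue}$ and $\mathcal E'_{red}\subsetneq\mathcal E_{red}$. A balanced edge set $\mathcal F$ is reducible with separator $S$ and decomposition $(\Gamma_1,S,\Gamma_2)$ if $S$ is a nonempty multiset with $\operatorname{supp}(S)\subseteq\operatorname{supp}(\mathcal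 F)$ and there are balanced edge sets $\Gamma_1\neq\mathcal F$, $\Gamma_2\neq\mathcal F$ with $S=\Gamma_{1,red}\cap\Gamma_{2,blue}$, $\mathcal F_{blue}\sqcup\mathcal F_{red}=\Gamma_{1,blue}\sqcup\Gamma_{1,red}\sqcup\Gamma_{2,blue}\sqcup\Gamma_{2,red}$, $\Gamma_{1,red},\Gamma_{2,red}\subseteq\mathcal F_{red}$ and $\Gamma_{1,blue},\Gamma_{2,blue}\subseteq\mathcal F_{blue}$. $S$ is proper with respect to $(\Gamma_1,S,\Gamma_2)$ if $S$ is a proper submultiset of both $\Gamma_{1,red}$ and $\Gamma_{2,blue}$; if not proper, $S$ is blue with respect to $(\Gamma_1,S,\Gamma_2)$ if $\Gamma_{1,red}=S$ and red if $\Gamma_{2,blue}=S$. For a bicolored multiset $\mathcal E$ and a multiset $S$ of edges, $\mathcal E+S$ has blue part $\mathcal E_{blue}\sqcup S$ and red part $\mathcal E_{red}\sqcup S$. A nonempty multiset $S$ with $\operatorname{supp}(S)\subseteq E(H)$ is a splitting set of $\mathcal E$ with decomposition $(\Gamma_1,S,\Gamma_2)$ if $\mathcal E+S$ is reducible with separator $S$ and decomposition $(\Gamma_1,S,\Gamma_2)$; it is a blue (resp. red) splitting set with respect to this decomposition if $S$ is a blue (resp. red) separator of $\mathcal E+S$ with respect to it; it is a proper splitting set of $\mathcal E$ if there is a decomposition of $\mathcal E+S$ with respect to which $S$ is proper. *)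

(* Defs.v *)
From mathcomp Require Import all_boot all_algebra.
From mathcomp Require Import mpoly.

Set Implicit Arguments.
Unset Strict Implicit.
Unset Printing Implicit Defensive.

Import GRing.Theory.

(* A hypergraph on the vertex set 'I_m (= {1..m} shifted) with r edges is
   given by an injective map [ed : 'I_r -> {set 'I_m}] (no repeated edges)
   whose values are nonempty. Edges of H are thus indexed by 'I_r, and a
   multiset of edges of H is a multiplicity function 'I_r -> nat. *)

Definition nonempty_edges (m r : nat) (ed : 'I_r -> {set 'I_m}) :=
  forall i, ed i != set0.

Definition uniform (m r : nat) (ed : 'I_r -> {set 'I_m}) (k : nat) :=
  forall i, #|ed i| = k.

Definition phiH (K : fieldType) (m r : nat) (ed : 'I_r -> {set 'I_m})
  (p : {mpoly K[r]}) : {mpoly K[m]} :=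
  mmap (@mpolyC m K) (fun i => (\prod_(j in ed i) 'X_j)%R) p.

Definition in_toric_ideal (K : fieldType) (m r : nat) (ed : 'I_r -> {set 'I_m})
  (p : {mpoly K[r]}) : Prop := phiH ed p = 0%R.

(* I_H is generated by its elements of (total) degree at most d:
   every element of I_H is a finite combination sum_i c_i g_i with g_i in I_H
   of degree <= d (msize g = 1 + total degree, msize 0 = 0). *)
Definition toric_generated_in_degree_le (K : fieldType) (m r : nat)
  (ed : 'I_r -> {set 'I_m}) (d : nat) : Prop :=
  forall f : {mpoly K[r]}, in_toric_ideal ed f ->
    exists (l : nat) (c g : 'I_l -> {mpoly K[r]}),
      (forall i, in_toric_ideal ed (g i) /\ (msize (g i) <= d.+1)%N) /\
      f = (\sum_(i < l) c i * g i)%R.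

Definition mset (r : nat) := {ffun 'I_r -> nat}.

Definition mset0 (r : nat) : mset r := [ffun=> 0%N].
Definition madd (r : nat) (A B : mset r) : mset r := [ffun i => (A i + B i)%N].
Definition mcap (r : nat) (A B : mset r) : mset r := [ffun i => minn (A i) (B i)].
Definition msub (r : nat) (A B : mset r) : Prop := forall i, (A i <= B i)%N.
Definition mproper (r : nat) (A B : mset r) : Prop := msub A B /\ A <> B.
Definition msz (r : nat) (A : mset r) : nat := (\sum_i A i)%N.
Definition mnonempty (r : nat) (A : mset r) : Prop := exists i, (0 < A i)%N.

Definition bms (r : nat) := (mset r * mset r)%type.
Definition blue (r : nat) (E : bms r) : mset r := E.1.
Definition red (r : nat) (E : bms r) : mset r := E.2.
Definition bsz (r : nat) (E : bms r) : nat := (msz (blue E) + msz (red E))%N.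

Definition balanced (m r : nat) (ed : 'I_r -> {set 'I_m}) (E : bms r) : Prop :=
  forall v : 'I_m,
    (\sum_(i | v \in ed i) blue E i)%N = (\sum_(i | v \in ed i) red E i)%N.

Definition primitive (m r : nat) (ed : 'I_r -> {set 'I_m}) (E : bms r) : Prop :=
  balanced ed E /\
  ~ (exists E' : bms r, balanced ed E' /\ (0 < bsz E')%N /\
       mproper (blue E') (blue E) /\ mproper (red E') (red E)).

Definition reducible_decomp (m r : nat) (ed : 'I_r -> {set 'I_m})
  (F : bms r) (S : mset r) (G1 G2 : bms r) : Prop :=
  [/\ mnonempty S,
      (forall i, (0 < S i)%N -> (0 < blue F i + red F i)%N),
      [/\ balanced ed G1, balanced ed G2, G1 <> F & G2 <> F] &
      [/\ S = mcap (red G1) (blue G2),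
          madd (blue F) (red F) =
            madd (madd (blue G1) (red G1)) (madd (blue G2) (red G2)),
          msub (red G1) (red F) /\ msub (red G2) (red F) &
          msub (blue G1) (blue F) /\ msub (blue G2) (blue F)]].

Definition proper_sep (r : nat) (S : mset r) (G1 G2 : bms r) : Prop :=
  mproper S (red G1) /\ mproper S (blue G2).

Definition blue_sep (r : nat) (S : mset r) (G1 G2 : bms r) : Prop :=
  ~ proper_sep S G1 G2 /\ red G1 = S.

Definition red_sep (r : nat) (S : mset r) (G1 G2 : bms r) : Prop :=
  ~ proper_sep S G1 G2 /\ blue G2 = S.

Definition bms_plus (r : nat) (E : bms r) (S : mset r) : bms r :=
  (madd (blue E) S, madd (red E) S).

Definition splitting_decomp (m r : nat) (ed : 'I_r -> {set 'I_m})
  (E : bms r) (S : mset r) (G1 G2 : bms r) : Prop :=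
  mnonempty S /\ reducible_decomp ed (bms_plus E S) S G1 G2.

Definition blue_splitting (m r : nat) (ed : 'I_r -> {set 'I_m})
  (E : bms r) (S : mset r) (G1 G2 : bms r) : Prop :=
  splitting_decomp ed E S G1 G2 /\ blue_sep S G1 G2.

Definition red_splitting (m r : nat) (ed : 'I_r -> {set 'I_m})
  (E : bms r) (S : mset r) (G1 G2 : bms r) : Prop :=
  splitting_decomp ed E S G1 G2 /\ red_sep S G1 G2.

Definition proper_splitting (m r : nat) (ed : 'I_r -> {set 'I_m})
  (E : bms r) (S : mset r) : Prop :=
  exists G1 G2 : bms r, splitting_decomp ed E S G1 G2 /\ proper_sep S G1 G2.

(* condition (ii) of Theorem 5.1, for the walk W of length 2n.
   Sequences are indexed by 1..N (values at other indices are irrelevant);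
   W_i has blue part (G2 i)_blue and red part (U1 i)_red. *)
Definition splitting_chain (m r : nat) (ed : 'I_r -> {set 'I_m})
  (W : bms r) (n : nat) : Prop :=
  exists (N : nat) (S R : nat -> mset r) (G1 G2 U1 U2 : nat -> bms r),
    let Wi := fun i => (blue (G2 i), red (U1 i)) : bms r in
    [/\ (1 <= N)%N,
        [/\ blue_splitting ed W (S 1%N) (G1 1%N) (G2 1%N),
            red_splitting ed W (R 1%N) (U1 1%N) (U2 1%N),
            (msz (S 1%N) < n)%N & (msz (R 1%N) < n)%N],
        (forall i, (1 <= i)%N -> (i < N)%N ->
          [/\ blue_splitting ed (Wi i) (S i.+1) (G1 i.+1) (G2 i.+1),
              red_splitting ed (Wi i) (R i.+1) (U1 i.+1) (U2 i.+1),
              (msz (S i.+1) < n)%N & (msz (R i.+1) < n)%N]) &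
        (mnonempty (mcap (S N) (R N)) \/
         exists P : mset r, proper_splitting ed (Wi N) P)].

(* Main.v *)
Require Import Defs.
From mathcomp Require Import all_boot all_algebra.
From mathcomp Require Import mpoly.
From mathcomp Require Import zify.
From Stdlib Require Import Relation_Operators Operators_Properties Classical ClassicalEpsilon.

Set Implicit Arguments.
Unset Strict Implicit.
Unset Printing Implicit Defensive.

Ltac atoms := repeat match goal with
 | |- context [ @fun_of_fin ?T ?U ?P ?f ?i ] =>
     let x := fresh "x" in set x : nat := (@fun_of_fin T U P f i)
 end.

Section Comb.
Variables (m r : nat) (ed : 'I_r -> {set 'I_m}).

Definition dgs (a : mset r) (v : 'I_m) : nat := (\sum_(i | v \in ed i) a i)%N.
Definition sameDeg (a b : mset r) : Prop := forall v, dgs a v = dgs b v.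
Definition madj (a b : mset r) : Prop := sameDeg a b /\ mnonempty (mcap a b).
Definition reach := clos_refl_sym_trans (mset r) madj.

Lemma dgs_add a b v : dgs (madd a b) v = (dgs a v + dgs b v)%N.
Proof. by rewrite /dgs -big_split; apply: eq_bigr => i _; rewrite ffunE. Qed.

Lemma balancedE (E : bms r) : balanced ed E <-> sameDeg (blue E) (red E).
Proof. by []. Qed.

Lemma sameDeg_sym a b : sameDeg a b -> sameDeg b a.
Proof. by move=> h v; rewrite h. Qed.
Lemma sameDeg_trans a b c : sameDeg a b -> sameDeg b c -> sameDeg a c.
Proof. by move=> h1 h2 v; rewrite h1 h2. Qed.

Lemma reach_sameDeg a b : reach a b -> sameDeg a b.
Proof.
elim.
- by move=> x y [].
- by move=> x v.
- by move=> x y _ /sameDeg_sym.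
- by move=> x y z _ h1 _ h2; apply: sameDeg_trans h1 h2.
Qed.

Lemma madd_ext (a b c d : mset r) : (forall i, a i + b i = c i + d i)%N -> madd a b = madd c d.
Proof. by move=> h; apply/ffunP=> i; rewrite !ffunE. Qed.

Variable k : nat.
Hypothesis H_unif : uniform ed k.

Lemma sum_dgs a : (\sum_v dgs a v = k * msz a)%N.
Proof.
rewrite /dgs /msz.
rewrite (eq_bigr (fun v => \sum_i (if v \in ed i then a i else 0))%N); last first.
  by move=> v _; rewrite big_mkcond.
rewrite exchange_big big_distrr /=; apply: eq_bigr => i _.
rewrite -big_mkcond /= sum_nat_const H_unif; lia.
Qed.

Hypothesis kpos : (0 < k)%N \/ r = 0%N.

Lemma sameDeg_msz a b : sameDeg a b -> msz a = msz b.
Proof.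
case: kpos => [kpos' | r0]; last first.
  by move=> _; rewrite /msz !big1 // => i; have := ltn_ord i; rewrite {2}r0.
move=> h; have : (k * msz a = k * msz b)%N.
  by rewrite -!sum_dgs; apply: eq_bigr => v _; rewrite h.
by move/eqP; rewrite eqn_mul2l gtn_eqF //= => /eqP.
Qed.


Definition msubtr (a b : mset r) : mset r := [ffun i => a i - b i].

Lemma msz_add (a b : mset r) : msz (madd a b) = (msz a + msz b)%N.
Proof. by rewrite /msz -big_split; apply: eq_bigr => i _; rewrite ffunE. Qed.

Lemma msz_pos (a : mset r) : mnonempty a -> (0 < msz a)%N.
Proof.
case=> i hi; rewrite /msz (bigD1 i) //=; lia.
Qed.

Lemma msz_pos_ne (a : mset r) : (0 < msz a)%N -> mnonempty a.
Proof.
move=> h; case: (pickP (fun i => 0 < a i)%N) => [i hi|h0]; first by exists i.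
move: h; rewrite /msz big1 // => i _; move: (h0 i) => /= /negbT; lia.
Qed.

Lemma msub_eq (a b : mset r) : msub a b -> msz a = msz b -> a = b.
Proof.
move=> hab hs; apply/ffunP => i.
have : (\sum_j (b j - a j) = 0)%N.
  rewrite sumnB; last by move=> j _; exact: hab.
  by move: hs; rewrite /msz => ->; rewrite subnn.
move/eqP; rewrite sum_nat_eq0 => /forallP /(_ i) /implyP /(_ isT) /eqP.
have := hab i; set x := a i; set y := b i; lia.
Qed.




Lemma ne_lt (x w : mset r) : x <> w -> msz x = msz w -> exists i, (x i < w i)%N.
Proof.
move=> hne hs; case: (pickP (fun i => x i < w i)%N) => [i hi|h0]; first by exists i.
exfalso; apply: hne; apply: esym; apply: msub_eq; last exact: (esym hs).
move=> i; have := h0 i => /= /negbT; atoms; lia.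
Qed.


Lemma dgs_sub (a c : mset r) v : msub c a ->
  (dgs (msubtr a c) v + dgs c v = dgs a v)%N.
Proof.
move=> h; rewrite -dgs_add; congr dgs; apply/ffunP => i; rewrite !ffunE.
have := h i; atoms; lia.
Qed.

Lemma blue_move (x y w : mset r) n :
  sameDeg x w -> sameDeg w y -> mnonempty (mcap x w) -> x <> w ->
  msz x = n -> msz w = n ->
  blue_splitting ed (x, y) (msubtr w (mcap x w))
     (msubtr x (mcap x w), msubtr w (mcap x w)) (w, y)
  /\ (msz (msubtr w (mcap x w)) < n)%N.
Proof.
set c := mcap x w; set S := msubtr w c => hxw hwy hc hne hx hw.
have cx : msub c x by move=> i; rewrite !ffunE; atoms; lia.
have cw : msub c w by move=> i; rewrite !ffunE; atoms; lia.
have [i0 hi0] := ne_lt hne (etrans hx (esym hw)).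
have Si0 : (0 < S i0)%N by rewrite !ffunE; atoms; lia.
have Sne : mnonempty S by exists i0.
have wSc : madd S c = w by apply/ffunP => i; rewrite !ffunE; atoms; lia.
split; last first.
  have := msz_pos hc; have := msz_add S c; rewrite wSc hw; lia.
split; first split=> //.
  split => //.
  - by move=> i; rewrite /= !ffunE; atoms; lia.
  - split.
    + move=> v; change (dgs (msubtr x c) v = dgs (msubtr w c) v); have := dgs_sub v cx; have := dgs_sub v cw; rewrite hxw; lia.
    + exact: hwy.
    + case=> /(congr1 (fun f : mset r => f i0)); rewrite !ffunE; atoms; lia.
    + case=> _ /(congr1 (fun f : mset r => f i0)); rewrite !ffunE; atoms; lia.
  - split.
    + apply/ffunP => i; rewrite /= !ffunE; atoms; lia.
    + apply/ffunP => i; rewrite /= !ffunE; atoms; lia.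
    + split => i; rewrite /= !ffunE; atoms; lia.
    + split => i; rewrite /= !ffunE; atoms; lia.
split.
- case=> [[_ /(_ erefl)]] //.
- by [].
Qed.


Lemma red_trivial (X : bms r) (R : mset r) :
  balanced ed X -> mnonempty R -> msub R (red X) ->
  red_splitting ed X R X (R, R).
Proof.
move=> hX [i0 hi0] hR.
split; last by split=> //; case=> _ [_ /(_ erefl)].
split; first by exists i0.
split.
- by exists i0.
- by move=> i; rewrite /= !ffunE; atoms; lia.
- split=> //.
  + move/(congr1 (fun E : bms r => red E i0)); rewrite /= !ffunE.
    have := hi0; atoms; lia.
  + case=> _ /(congr1 (fun f : mset r => f i0)); rewrite !ffunE.
    have := hi0; have := hR i0; atoms; lia.
- split.
  + apply/ffunP => i; rewrite /= !ffunE; have := hR i; atoms; lia.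
  + apply/ffunP => i; rewrite /= !ffunE; atoms; lia.
  + split => i; rewrite /= !ffunE; atoms; lia.
  + split => i; rewrite /= !ffunE; atoms; lia.
Qed.

Lemma chain_base (X : bms r) n S R G1 G2 U1 U2 :
  blue_splitting ed X S G1 G2 -> red_splitting ed X R U1 U2 ->
  (msz S < n)%N -> (msz R < n)%N -> mnonempty (mcap S R) ->
  splitting_chain ed X n.
Proof.
move=> hb hr hs hr' hsr.
exists 1%N, (fun _ => S), (fun _ => R), (fun _ => G1), (fun _ => G2),
  (fun _ => U1), (fun _ => U2).
split=> //; first by move=> i h1 h2; lia.
by left.
Qed.

Lemma chain_cons (X : bms r) n S R G1 G2 U1 U2 :
  blue_splitting ed X S G1 G2 -> red_splitting ed X R U1 U2 ->
  (msz S < n)%N -> (msz R < n)%N ->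
  splitting_chain ed (blue G2, red U1) n ->
  splitting_chain ed X n.
Proof.
move=> hb hr hs hr' [N [S' [R' [G1' [G2' [U1' [U2' [hN h1 hstep hend]]]]]]]].
pose sh (T : Type) (a : T) (f : nat -> T) i := if (i <= 1)%N then a else f i.-1.
exists N.+1, (sh _ S S'), (sh _ R R'), (sh _ G1 G1'), (sh _ G2 G2'),
  (sh _ U1 U1'), (sh _ U2 U2').
split=> //.
- move=> i hi1 hiN; rewrite /sh /=.
  case: (leqP i 1) => hi.
  + have -> : i = 1%N by lia.
    by [].
  + have e1 : (i < 1)%N = false by lia.
    rewrite e1; have := hstep i.-1; rewrite prednK; last by lia.
    by apply; lia.
- rewrite /sh /=; have e1 : (N < 1)%N = false by lia.
  by rewrite e1.
Qed.


Definition munit (i0 : 'I_r) : mset r := [ffun j => nat_of_bool (j == i0)].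

Lemma msz_munit i0 : msz (munit i0) = 1%N.
Proof.
rewrite /msz (bigD1 i0) //= big1 ?ffunE ?eqxx // => j hj.
by rewrite ffunE (negbTE hj).
Qed.

Lemma madj_sym a b : madj a b -> madj b a.
Proof.
case=> h [i hi]; split; first exact: sameDeg_sym.
by exists i; move: hi; rewrite !ffunE minnC.
Qed.

Lemma chain_of_path (v : mset r) n (x : mset r) :
  clos_refl_sym_trans_n1 _ madj v x -> (1 < n)%N ->
  x <> v -> msz v = n -> sameDeg x v -> splitting_chain ed (x, v) n.
Proof.
move=> h; elim: h => [| z x0 hxw hwz IH] hn hne hv hxv; first by [].
have {}hxw : madj x0 z.
  by case: hxw => // /madj_sym.
have hx : msz x0 = n by rewrite (sameDeg_msz hxv).
have hzv : sameDeg z v := sameDeg_trans (sameDeg_sym hxw.1) hxv.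
case: (eqVneq x0 z) => [exz | nxz].
  by subst; apply: IH.
case: (eqVneq z v) => [ezv | nzv].
  subst z.
  have [hb hS] := blue_move (y := v) hxw.1 (fun _ => erefl) hxw.2 (elimN eqP nxz) hx hv.
  have [i0 hi0] := hb.1.1.
  have hR := @red_trivial (x0, v) (munit i0) hxv.
  apply: chain_base hb (hR _ _) hS _ _.
  all: try by exists i0; rewrite ffunE eqxx.
  all: try by rewrite msz_munit.
  all: try by move=> i; rewrite /= ffunE; case: eqP => [-> | _] //;
    move: hi0; rewrite !ffunE; atoms; lia.
  all: try by exists i0; rewrite !ffunE eqxx; move: hi0; rewrite !ffunE; atoms; lia.
have [hb hS] := blue_move (y := v) hxw.1 hzv hxw.2 (elimN eqP nxz) hx (etrans (sameDeg_msz hzv) hv).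
have [i1 hi1] : mnonempty v by apply: msz_pos_ne; lia.
have hR := @red_trivial (x0, v) (munit i1) hxv.
apply: chain_cons hb (hR _ _) hS _ _.
all: try by exists i1; rewrite ffunE eqxx.
all: try by rewrite msz_munit.
all: try by move=> i; rewrite /= ffunE; case: eqP => [-> | _] //; move: hi1; atoms; lia.
apply: IH => //; first exact/eqP.
Qed.


Lemma reach_step a b : madj a b -> reach a b.
Proof. exact: rst_step. Qed.
Lemma reach_trans a b c : reach a b -> reach b c -> reach a c.
Proof. exact: rst_trans. Qed.
Lemma reach_symm a b : reach a b -> reach b a.
Proof. exact: rst_sym. Qed.

Lemma dgs_eq (a b : mset r) v : a = b -> dgs a v = dgs b v.
Proof. by move=> ->. Qed.

Lemma lt_of_msub_ne (a x : mset r) : msub a x -> a <> x -> exists i, (a i < x i)%N.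
Proof.
move=> hax hne; case: (pickP (fun i => a i < x i)%N) => [i hi|h0]; first by exists i.
exfalso; apply: hne; apply/ffunP => i; have := hax i; have := h0 i => /= /negbT.
atoms; lia.
Qed.

Lemma blue_inv (x y : mset r) n S G1 G2 :
  sameDeg x y -> msz x = n -> blue_splitting ed (x, y) S G1 G2 -> (msz S < n)%N ->
  sameDeg (blue G2) x /\ madj x (blue G2).
Proof.
move=> hxy hx [[_ [_ _ [bG1 bG2 _ _] [eS etot [r1F r2F] [b1F b2F]]]] [_ eR1]] hS.
have {}bG1 : sameDeg (blue G1) (red G1) := bG1.
have {}bG2 : sameDeg (blue G2) (red G2) := bG2.
have Sb2 : msub S (blue G2).
  by move=> i; rewrite eS !ffunE; atoms; lia.
have hdeg : sameDeg (blue G2) x.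
  move=> v; have := dgs_eq v etot; rewrite !dgs_add /= -eR1 bG1 bG2 hxy; lia.
split => //.
have hs2 : msz (blue G2) = n by rewrite (sameDeg_msz hdeg).
have [i hi] : exists i, (S i < blue G2 i)%N.
  apply: lt_of_msub_ne => // eSb; move: hS; rewrite eSb hs2; lia.
split; first exact: sameDeg_sym.
exists i; rewrite ffunE; move: hi (b2F i); rewrite /= ffunE; atoms; lia.
Qed.

Lemma red_inv (x y : mset r) n R U1 U2 :
  sameDeg x y -> msz x = n -> red_splitting ed (x, y) R U1 U2 -> (msz R < n)%N ->
  sameDeg (red U1) x /\ madj y (red U1).
Proof.
move=> hxy hx [[_ [_ _ [bU1 bU2 _ _] [eR etot [r1F r2F] [b1F b2F]]]] [_ eB2]] hR.
have {}bU1 : sameDeg (blue U1) (red U1) := bU1.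
have {}bU2 : sameDeg (blue U2) (red U2) := bU2.
have Rr1 : msub R (red U1).
  by move=> i; rewrite eR !ffunE; atoms; lia.
have hdeg : sameDeg (red U1) x.
  move=> v; have := dgs_eq v etot; rewrite !dgs_add /= eB2 bU1 -bU2 eB2 hxy; lia.
split => //.
have hs2 : msz (red U1) = n by rewrite (sameDeg_msz hdeg).
have [i hi] : exists i, (R i < red U1 i)%N.
  apply: lt_of_msub_ne => // eSb; move: hR; rewrite eSb hs2; lia.
split; first exact: sameDeg_trans (sameDeg_sym hxy) (sameDeg_sym hdeg).
exists i; rewrite ffunE; move: hi (r1F i); rewrite /= ffunE; atoms; lia.
Qed.


Lemma swap_reach (x y a b : mset r) :
  sameDeg x y -> msub a x -> msub b y -> sameDeg a b -> mnonempty a -> a <> x ->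
  reach x y.
Proof.
move=> hxy hax hby hab ha hne.
set z := madd b (msubtr x a).
have hzx : sameDeg z x.
  move=> v; rewrite dgs_add -hab; exact: (etrans (addnC _ _) (dgs_sub v hax)).
have [i hi] := lt_of_msub_ne hax hne.
have [j hj] : mnonempty b.
  by apply: msz_pos_ne; rewrite -(sameDeg_msz hab); exact: msz_pos.
apply: (@reach_trans _ z).
  apply: reach_step; split; first exact: sameDeg_sym.
  by exists i; rewrite !ffunE; move: hi; atoms; lia.
apply: reach_step; split; first exact: sameDeg_trans hzx hxy.
by exists j; rewrite !ffunE; move: hj (hby j); atoms; lia.
Qed.

Lemma proper_reach (x y : mset r) S :
  sameDeg x y -> msz x = msz y -> proper_splitting ed (x, y) S -> reach x y.
Proof.
move=> hxy hsz [[b1 r1] [[b2 r2] [[_ [_ _ [bG1 bG2 _ _] [eS etot [r1F r2F] [b1F b2F]]]]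
  [[_ nS1] [_ nS2]]]]].
have {}bG1 : sameDeg b1 r1 := bG1.
have {}bG2 : sameDeg b2 r2 := bG2.
simpl in *.
case: (pickP (fun i => (0 < x i) && (0 < y i))%N) => [i /andP [hxi hyi] | hdis].
  apply: reach_step; split=> //; exists i; rewrite ffunE; move: hxi hyi; atoms; lia.
have dis : forall i, x i = 0%N \/ y i = 0%N.
  move=> i; have := hdis i => /= /negbT; rewrite negb_and -!leqNgt !leqn0.
  by case/orP => /eqP ->; [left | right].
have Sr1 : msub S r1 by move=> i; rewrite eS !ffunE; atoms; lia.
have Sb2 : msub S b2 by move=> i; rewrite eS !ffunE; atoms; lia.
have pt : forall i, S i = minn (r1 i) (b2 i) /\
    (x i + S i + (y i + S i) = b1 i + r1 i + (b2 i + r2 i))%N /\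
    (r1 i <= y i + S i)%N /\ (r2 i <= y i + S i)%N /\
    (b1 i <= x i + S i)%N /\ (b2 i <= x i + S i)%N.
  move=> i; split; [|split; [|split; [|split; [|split]]]].
  - by rewrite eS ffunE.
  - by have := congr1 (fun f : mset r => f i) etot; rewrite !ffunE.
  - by have := r1F i; rewrite ffunE.
  - by have := r2F i; rewrite ffunE.
  - by have := b1F i; rewrite ffunE.
  - by have := b2F i; rewrite ffunE.
pose rho := msubtr r1 S; pose beta := msubtr b2 S.
pose p : mset r := [ffun i => if y i == 0%N then 0%N else b1 i].
pose q : mset r := [ffun i => if y i == 0%N then r2 i else 0%N].
have hA : madd x p = madd (madd b1 beta) q.
  apply/ffunP => i; rewrite !ffunE; have := dis i; have := pt i.
  case: eqP => hy; atoms; lia.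
have hB : madd y q = madd (madd p rho) r2.
  apply/ffunP => i; rewrite !ffunE; have := dis i; have := pt i.
  case: eqP => hy; atoms; lia.
have hr1 : madd S rho = r1.
  by apply/ffunP => i; rewrite !ffunE; have := Sr1 i; atoms; lia.
have hb2 : madd S beta = b2.
  by apply/ffunP => i; rewrite !ffunE; have := Sb2 i; atoms; lia.
have hpq : sameDeg p q.
  move=> v; have := dgs_eq v hA; have := dgs_eq v hB; have := dgs_eq v hr1;
  have := dgs_eq v hb2; rewrite !dgs_add bG1 bG2 hxy; lia.
have hqx : msub q x.
  move=> i; have := congr1 (fun f : mset r => f i) hA; rewrite !ffunE.
  case: eqP => _; atoms; lia.
have hpy : msub p y.
  move=> i; have := congr1 (fun f : mset r => f i) hB; rewrite !ffunE.
  case: eqP => _; atoms; lia.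
have [ib hib] := lt_of_msub_ne Sb2 (fun e => nS2 e).
have [ir hir] := lt_of_msub_ne Sr1 (fun e => nS1 e).
case: (eqVneq (msz q) 0%N) => [q0 | qn0]; last first.
  case: (eqVneq q x) => [eqx | neqx].
    exfalso; move: hib (pt ib) (dis ib) (congr1 (fun f : mset r => f ib) hA).
    rewrite eqx !ffunE; case: eqP => _; atoms; lia.
  apply: (swap_reach hxy hqx hpy (sameDeg_sym hpq)) => //.
    by apply: msz_pos_ne; lia.
  exact/eqP.
have p0 : msz p = 0%N by rewrite (sameDeg_msz hpq).
have qz : forall i, q i = 0%N.
  by move=> i; apply/eqP; rewrite -leqn0 -q0 /msz (bigD1 i) //= leq_addr.
have pz : forall i, p i = 0%N.
  by move=> i; apply/eqP; rewrite -leqn0 -p0 /msz (bigD1 i) //= leq_addr.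
set w := madd r1 beta.
apply: (@reach_trans _ w).
  apply: reach_step; split.
    move=> v; have := dgs_eq v hA; rewrite /w !dgs_add bG1.
    have -> : dgs p v = 0%N by rewrite /dgs big1 // => i _; rewrite pz.
    have -> : dgs q v = 0%N by rewrite /dgs big1 // => i _; rewrite qz.
    lia.
  exists ib; move: hib (congr1 (fun f : mset r => f ib) hA) (pz ib) (qz ib).
  rewrite /w !ffunE; atoms; lia.
apply: reach_step; split.
  move=> v; have := dgs_eq v hB; have := dgs_eq v hr1; have := dgs_eq v hb2.
  rewrite /w !dgs_add -bG2.
  have -> : dgs p v = 0%N by rewrite /dgs big1 // => i _; rewrite pz.
  have -> : dgs q v = 0%N by rewrite /dgs big1 // => i _; rewrite qz.
  lia.
exists ir; move: hir (congr1 (fun f : mset r => f ir) hB) (pz ir) (qz ir).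
rewrite /w !ffunE; atoms; lia.
Qed.


Lemma blue_sub X S G1 G2 : blue_splitting ed X S G1 G2 -> msub S (blue G2).
Proof.
case=> [[_ [_ _ _ [eS _ _ _]]] _] i; rewrite eS !ffunE; atoms; lia.
Qed.

Lemma red_sub X R U1 U2 : red_splitting ed X R U1 U2 -> msub R (red U1).
Proof.
case=> [[_ [_ _ _ [eS _ _ _]]] _] i; rewrite eS !ffunE; atoms; lia.
Qed.

Lemma chain_reach (x y : mset r) n :
  sameDeg x y -> msz x = n -> splitting_chain ed (x, y) n -> reach x y.
Proof.
move=> hxy hx [N [S [R [G1 [G2 [U1 [U2 [hN [hb1 hr1 hs1 hr1'] hstep hend]]]]]]]].
pose Inv i := [/\ reach x (blue (G2 i)), reach y (red (U1 i)),
   sameDeg (blue (G2 i)) x & sameDeg (red (U1 i)) x].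
have inv : forall j, (j < N)%N -> Inv j.+1.
  elim=> [_ | j IH hj].
    have [d1 a1] := blue_inv hxy hx hb1 hs1.
    have [d2 a2] := red_inv hxy hx hr1 hr1'.
    by split=> //; apply: reach_step.
  have [ra rb da db] := IH (ltnW hj).
  have [hb hr hs hr'] := hstep j.+1 isT hj.
  have hxy' : sameDeg (blue (G2 j.+1)) (red (U1 j.+1)) :=
    sameDeg_trans da (sameDeg_sym db).
  have hx' : msz (blue (G2 j.+1)) = n by rewrite (sameDeg_msz da).
  have [d1 a1] := blue_inv hxy' hx' hb hs.
  have [d2 a2] := red_inv hxy' hx' hr hr'.
  split.
  - exact: reach_trans ra (reach_step a1).
  - exact: reach_trans rb (reach_step a2).
  - exact: sameDeg_trans d1 da.
  - exact: sameDeg_trans d2 da.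
have hNN : N = N.-1.+1 by rewrite prednK.
have [ra rb da db] : Inv N by rewrite hNN; apply: inv; lia.
have hxy' : sameDeg (blue (G2 N)) (red (U1 N)) := sameDeg_trans da (sameDeg_sym db).
apply: (reach_trans ra); apply: (reach_trans _ (reach_symm rb)).
case: hend => [[e he] | [P hP]]; last first.
  apply: proper_reach hxy' _ hP.
  by rewrite (sameDeg_msz da) (sameDeg_msz db).
have [sb sr] : msub (S N) (blue (G2 N)) /\ msub (R N) (red (U1 N)).
  case: (eqVneq N 1%N) => [-> | hN1].
    by split; [exact: blue_sub hb1 | exact: red_sub hr1].
  have := hstep N.-1; rewrite -hNN => /(_ _ _) [].
  - lia.
  - lia.
  - by move=> hb hr _ _; split; [exact: blue_sub hb | exact: red_sub hr].
apply: reach_step; split=> //; exists e; move: he (sb e) (sr e); rewrite !ffunE.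
atoms; lia.
Qed.


Lemma conn_all (d : nat)
  (HR : forall (W : bms r) (n : nat), primitive ed W -> bsz W = n.*2 -> (d < n)%N ->
     (exists S : mset r, proper_splitting ed W S) \/ splitting_chain ed W n)
  (x y : mset r) : sameDeg x y -> (d < msz x)%N -> reach x y.
Proof.
move=> hxy hd.
have hyx : msz y = msz x by rewrite (sameDeg_msz hxy).
case: (classic (primitive ed (x, y))) => hp.
  case: (HR (x, y) (msz x) hp _ hd) => [| [S hS] | hc].
  - by rewrite /bsz /= hyx -addnn.
  - by apply: proper_reach hS.
  - exact: chain_reach hc.
have [[a b] [hab [hsz [[ha hnea] [hb hneb]]]]] :
  exists E' : bms r, balanced ed E' /\ (0 < bsz E')%N /\
       mproper (blue E') x /\ mproper (red E') y.
  apply: NNPP => hne; apply: hp; split=> //.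
simpl in *.
have hab' : sameDeg a b := hab.
apply: (swap_reach hxy ha hb hab') => //.
apply: msz_pos_ne; move: hsz; rewrite /bsz /= (sameDeg_msz hab'); lia.
Qed.

Lemma chain_from_reach (W : bms r) n :
  primitive ed W -> bsz W = n.*2 -> (1 < n)%N -> reach (blue W) (red W) ->
  splitting_chain ed W n.
Proof.
case: W => x v [hbal hprim] hsz hn hre.
have hxv : sameDeg x v := hbal.
have hvx : msz v = msz x by rewrite (sameDeg_msz hxv).
have hv : msz v = n by move: hsz; rewrite /bsz /= hvx -addnn; lia.
apply: chain_of_path => //.
- apply/clos_rst_rstn1_iff; exact: reach_symm.
- move=> exv; subst v.
  have [i hi] : mnonempty x by apply: msz_pos_ne; lia.
  apply: hprim; exists (msubtr x (munit i), msubtr x (munit i)).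
  have hm : msz (msubtr x (munit i)) = n.-1.
    have : madd (msubtr x (munit i)) (munit i) = x.
      apply/ffunP => j; rewrite !ffunE; case: eqP => [-> | _]; move: hi; atoms; lia.
    move/(congr1 (@msz r)); rewrite msz_add msz_munit; lia.
  split; first by [].
  split; first by rewrite /bsz /= hm; lia.
  have hsub : msub (msubtr x (munit i)) x by move=> j; rewrite !ffunE; atoms; lia.
  have hneq : msubtr x (munit i) <> x by move=> e; move: hm; rewrite e; lia.
  by split; split.
Qed.

End Comb.
Section Alg.
Variables (K : fieldType) (m r : nat) (ed : 'I_r -> {set 'I_m}).
Local Open Scope ring_scope.
Import GRing.Theory.

Definition dgm (mu : 'X_{1..r}) : 'X_{1..m} :=
  [multinom (\sum_(i | j \in ed i) mu i)%N | j < m].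

Definition hH (i : 'I_r) : {mpoly K[m]} := \prod_(j in ed i) 'X_j.

Lemma mmap1_dgm (mu : 'X_{1..r}) : mmap1 hH mu = 'X_[dgm mu].
Proof.
rewrite /mmap1 /hH mpolyXE_id.
under [RHS]eq_bigr => j _ do rewrite mnmE -prodrXr.
rewrite (eq_bigr (fun i => \prod_(j < m) (if j \in ed i then 'X_j ^+ mu i else 1))); last first.
  by move=> i _; rewrite -prodrXl big_mkcond.
rewrite exchange_big /=; apply: eq_bigr => j _.
by rewrite [RHS]big_mkcond.
Qed.

Lemma phiH_X (mu : 'X_{1..r}) : phiH ed ('X_[mu] : {mpoly K[r]}) = 'X_[dgm mu].
Proof. rewrite /phiH mmapX; exact: mmap1_dgm. Qed.

Lemma phiH_coef (p : {mpoly K[r]}) (b : 'X_{1..m}) :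
  (phiH ed p)@_b = \sum_(mu <- msupp p) p@_mu * (dgm mu == b)%:R.
Proof.
rewrite /phiH /mmap raddf_sum /=; apply: eq_bigr => mu _.
by rewrite mcoeffCM -/(mmap1 hH mu) mmap1_dgm mcoeffX.
Qed.


Definition SpanL (d : nat) (p : {mpoly K[r]}) :=
  exists s : seq ({mpoly K[r]} * {mpoly K[r]}),
    (forall x, x \in s -> in_toric_ideal ed x.2 /\ (msize x.2 <= d.+1)%N) /\
    p = \sum_(x <- s) x.1 * x.2.

Variable d : nat.

Lemma SpanL0 : SpanL d 0.
Proof. by exists [::]; split=> //; rewrite big_nil. Qed.

Lemma SpanLD p q : SpanL d p -> SpanL d q -> SpanL d (p + q).
Proof.
move=> [s1 [h1 ->]] [s2 [h2 ->]]; exists (s1 ++ s2); split; last by rewrite big_cat.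
by move=> x; rewrite mem_cat => /orP [/h1 | /h2].
Qed.

Lemma SpanLM c p : SpanL d p -> SpanL d (c * p).
Proof.
move=> [s [h ->]]; exists [seq (c * x.1, x.2) | x <- s]; split.
  move=> x /mapP [y ys ->] /=; exact: h.
by rewrite big_map mulr_sumr; apply: eq_bigr => x _; rewrite mulrA.
Qed.

Lemma SpanLN p : SpanL d p -> SpanL d (- p).
Proof. by move=> h; rewrite -mulN1r; apply: SpanLM. Qed.

Lemma SpanLB p q : SpanL d p -> SpanL d q -> SpanL d (p - q).
Proof. by move=> hp hq; apply: SpanLD => //; apply: SpanLN. Qed.

Lemma SpanL_gen g : in_toric_ideal ed g -> (msize g <= d.+1)%N -> SpanL d g.
Proof.
move=> h1 h2; exists [:: (1, g)]; split; last by rewrite big_seq1 mul1r.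
by move=> x; rewrite mem_seq1 => /eqP ->.
Qed.

Lemma SpanL_sum (T : Type) (s : seq T) (F : T -> {mpoly K[r]}) :
  (forall x, SpanL d (F x)) -> SpanL d (\sum_(x <- s) F x).
Proof.
move=> h; apply: (big_ind (SpanL d)) => //; [exact: SpanL0 | exact: SpanLD].
Qed.

Lemma SpanL_gen_deg p : SpanL d p ->
  exists (l : nat) (c g : 'I_l -> {mpoly K[r]}),
      (forall i, in_toric_ideal ed (g i) /\ (msize (g i) <= d.+1)%N) /\
      p = (\sum_(i < l) c i * g i)%R.
Proof.
move=> [s [h ->]]; exists (size s), (fun i => (nth (0,0) s i).1),
  (fun i => (nth (0,0) s i).2); split.
  by move=> i; apply: h; apply: mem_nth.
by rewrite (big_nth (0,0)) big_mkord.
Qed.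


Definition mon (a : mset r) : 'X_{1..r} := [multinom a i | i < r].
Definition msof (mu : 'X_{1..r}) : mset r := [ffun i => mu i].

Lemma mon_msof mu : mon (msof mu) = mu.
Proof. by apply/mnmP => i; rewrite mnmE ffunE. Qed.

Lemma msof_mon a : msof (mon a) = a.
Proof. by apply/ffunP => i; rewrite ffunE mnmE. Qed.

Lemma mon_add a b : mon (madd a b) = (mon a + mon b)%MM.
Proof. by apply/mnmP => i; rewrite mnmDE !mnmE ffunE. Qed.

Lemma msof_add mu nu : msof (mu + nu)%MM = madd (msof mu) (msof nu).
Proof. by apply/ffunP => i; rewrite !ffunE mnmDE. Qed.

Lemma mdeg_mon a : mdeg (mon a) = msz a.
Proof. by rewrite mdegE; apply: eq_bigr => i _; rewrite mnmE. Qed.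

Lemma mdeg_msof mu : msz (msof mu) = mdeg mu.
Proof. by rewrite -mdeg_mon mon_msof. Qed.

Lemma dgs_msof mu v : dgs ed (msof mu) v = dgm mu v.
Proof. by rewrite mnmE /dgs; apply: eq_bigr => i _; rewrite ffunE. Qed.

Lemma dgm_sameDeg mu nu : dgm mu = dgm nu <-> sameDeg ed (msof mu) (msof nu).
Proof.
split; first by move=> h v; rewrite !dgs_msof h.
by move=> h; apply/mnmP => v; rewrite -!dgs_msof h.
Qed.

Lemma phiH_binom (a b : mset r) : sameDeg ed a b ->
  phiH ed ('X_[mon a] - 'X_[mon b] : {mpoly K[r]}) = 0.
Proof.
move=> h.
have -> : phiH ed ('X_[mon a] - 'X_[mon b] : {mpoly K[r]}) =
   phiH ed ('X_[mon a] : {mpoly K[r]}) - phiH ed ('X_[mon b] : {mpoly K[r]}).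
  by rewrite /phiH mmapB.
rewrite !phiH_X.
suff -> : dgm (mon a) = dgm (mon b) by rewrite subrr.
by apply/dgm_sameDeg; rewrite !msof_mon.
Qed.


Variables (k : nat) (H_unif : uniform ed k) (kpos : (0 < k)%N \/ r = 0%N).

Lemma Xmon_add a b : ('X_[mon (madd a b)] : {mpoly K[r]}) = 'X_[mon a] * 'X_[mon b].
Proof. by rewrite mon_add mpolyXD. Qed.

Lemma msize_binom (a b : mset r) :
  msz a = msz b -> (msize ('X_[mon a] - 'X_[mon b] : {mpoly K[r]}) <= (msz a).+1)%N.
Proof.
move=> h; apply: (leq_trans (msizeD_le _ _)); rewrite msizeN !msizeX !mdeg_mon h.
by rewrite maxnn.
Qed.

Lemma binom
  (HR : forall (W : bms r) (n : nat), primitive ed W -> bsz W = n.*2 -> (d < n)%N ->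
     (exists S : mset r, proper_splitting ed W S) \/ splitting_chain ed W n) D :
  forall a b : mset r, msz a = D -> sameDeg ed a b ->
    SpanL d ('X_[mon a] - 'X_[mon b]).
Proof.
elim/ltn_ind: D => D IH a b hD hab.
have hba : msz b = D by rewrite -(sameDeg_msz H_unif kpos hab).
case: (leqP D d) => hDd.
  apply: SpanL_gen; first exact: phiH_binom.
  by apply: (leq_trans (msize_binom (etrans hD (esym hba)))); rewrite hD.
have hre : reach ed a b by apply: (conn_all H_unif kpos HR hab); rewrite hD.
move: hre hD; clear hab hba.
elim=> {a b} [x y [hxy [i hi]] | x | x y hxy IHr | x y z hxy IHxy hyz IHyz] hD.
- set x' := msubtr x (munit i); set y' := msubtr y (munit i).
  have ex : madd (munit i) x' = x.
    apply/ffunP => j; rewrite !ffunE; case: eqP => [-> | _]; move: hi; rewrite !ffunE;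
    atoms; lia.
  have ey : madd (munit i) y' = y.
    apply/ffunP => j; rewrite !ffunE; case: eqP => [-> | _]; move: hi; rewrite !ffunE;
    atoms; lia.
  rewrite -ex -ey !Xmon_add -mulrBr; apply: SpanLM.
  have hx' : msz x' = D.-1.
    by move: hD; rewrite -ex msz_add msz_munit; lia.
  apply: (IH D.-1) => //; first by lia.
  move=> v; have := hxy v; rewrite -ex -ey !dgs_add; lia.
- by rewrite subrr; exact: SpanL0.
- have hx : msz x = D by rewrite (sameDeg_msz H_unif kpos (reach_sameDeg hxy)).
  by rewrite -opprB; apply: SpanLN; apply: IHr.
- have hy : msz y = D by rewrite -(sameDeg_msz H_unif kpos (reach_sameDeg hxy)).
  have -> : ('X_[mon x] - 'X_[mon z] : {mpoly K[r]}) =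
    ('X_[mon x] - 'X_[mon y]) + ('X_[mon y] - 'X_[mon z]).
    by rewrite addrA subrK.
  by apply: SpanLD; [apply: IHxy | apply: IHyz].
Qed.


Lemma kernel_span
  (HR : forall (W : bms r) (n : nat), primitive ed W -> bsz W = n.*2 -> (d < n)%N ->
     (exists S : mset r, proper_splitting ed W S) \/ splitting_chain ed W n)
  (f : {mpoly K[r]}) : phiH ed f = 0 -> SpanL d f.
Proof.
move=> hf.
set s := msupp f.
pose rep (mu : 'X_{1..r}) := nth 0%MM s (find (fun mu' => dgm mu' == dgm mu) s).
have hrep : forall mu, mu \in s -> dgm (rep mu) = dgm mu.
  move=> mu hmu; apply/eqP; rewrite /rep.
  apply: (nth_find _ (a := fun mu' => dgm mu' == dgm mu)).
  by apply/hasP; exists mu.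
rewrite (mpolyE f) -/s.
have -> : \sum_(mu <- s) f@_mu *: ('X_[mu] : {mpoly K[r]}) =
   \sum_(mu <- s) f@_mu *: ('X_[mu] - 'X_[rep mu]) + \sum_(mu <- s) f@_mu *: 'X_[rep mu].
  by rewrite -big_split; apply: eq_bigr => mu _; rewrite /= -scalerDr subrK.
have -> : \sum_(mu <- s) f@_mu *: ('X_[rep mu] : {mpoly K[r]}) = 0.
  apply/mpolyP => z; rewrite mcoeff0 raddf_sum /=.
  under eq_bigr => mu _ do rewrite mcoeffZ mcoeffX.
  case: (boolP (has (fun mu => rep mu == z) s)) => [/hasP [mu0 hmu0 /eqP hz] | hn].
    rewrite (eq_big_seq (fun mu => f@_mu * (dgm mu == dgm mu0)%:R)).
      by rewrite -phiH_coef hf mcoeff0.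
    move=> mu hmu; suff -> : (rep mu == z) = (dgm mu == dgm mu0) by [].
    apply/eqP/eqP => [e | e].
      by rewrite -(hrep _ hmu) -(hrep _ hmu0) e hz.
    by rewrite -hz /rep e.
  rewrite big1_seq // => mu hmu; move/hasPn: hn => /(_ mu hmu) /negbTE ->.
  by rewrite mulr0.
rewrite addr0 big_seq; apply: (big_ind (SpanL d)); [exact: SpanL0 | exact: SpanLD |].
move=> mu hmu; rewrite -mul_mpolyC; apply: SpanLM.
rewrite -{1}(mon_msof mu) -(mon_msof (rep mu)).
apply: (binom HR erefl).
by apply/dgm_sameDeg; rewrite hrep.
Qed.


Definition decP (P : Prop) : bool := if excluded_middle_informative P then true else false.
Lemma decPP P : decP P <-> P.
Proof. by rewrite /decP; case: excluded_middle_informative. Qed.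

Lemma dgmD mu nu : dgm (mu + nu)%MM = (dgm mu + dgm nu)%MM.
Proof. by apply/mnmP => j; rewrite mnmDE !mnmE -big_split; apply: eq_bigr => i _; rewrite mnmDE. Qed.

Lemma lhs_reach (gen : toric_generated_in_degree_le K ed d) (u v : mset r) n :
  sameDeg ed u v -> msz u = n -> (d < n)%N -> reach ed u v.
Proof.
move=> huv hu hdn; apply: NNPP => hnr.
pose Q (mu : 'X_{1..r}) : bool := (mdeg mu == n) && decP (reach ed u (msof mu)).
pose lam (p : {mpoly K[r]}) := \sum_(mu : 'X_{1..r < n.+1}) p@_mu * (Q mu)%:R.
have lamD p q : lam (p + q) = lam p + lam q.
  by rewrite /lam -big_split; apply: eq_bigr => mu _; rewrite mcoeffD mulrDl.
have lam0 : lam 0 = 0.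
  by rewrite /lam big1 // => mu _; rewrite mcoeff0 mul0r.
have lamZ c p : lam (c *: p) = c * lam p.
  by rewrite /lam mulr_sumr; apply: eq_bigr => mu _; rewrite mcoeffZ mulrA.
have lamS (T : Type) (s : seq T) (F : T -> {mpoly K[r]}) :
    lam (\sum_(x <- s) F x) = \sum_(x <- s) lam (F x).
  exact: (big_morph lam lamD lam0).
have lamX nu : lam 'X_[nu] = (Q nu)%:R.
  rewrite /lam; case: (ltnP (mdeg nu) n.+1) => h.
    rewrite (bigD1 (BMultinom h)) //= mcoeffX eqxx mul1r big1 ?addr0 // => mu hmu.
    rewrite mcoeffX; suff -> : (nu == mu) = false by rewrite mul0r.
    apply/negbTE; apply: contra hmu => /eqP e; rewrite bmeqP /= e.
    by [].
  rewrite big1; last first.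
    move=> mu _; rewrite mcoeffX; suff -> : (nu == mu) = false by rewrite mul0r.
    apply/negbTE/eqP => e; move: h; rewrite e; have := bmdeg mu; lia.
  rewrite /Q; suff -> : (mdeg nu == n) = false by [].
  apply/negbTE/eqP => e; move: h; rewrite e; lia.
have lamXg (a : 'X_{1..r}) (g : {mpoly K[r]}) :
    in_toric_ideal ed g -> (msize g <= d.+1)%N -> lam ('X_[a] * g) = 0.
  move=> hg hsg.
  have -> : 'X_[a] * g = \sum_(w <- msupp g) g@_w *: 'X_[(a + w)%MM].
    rewrite {1}(mpolyE g) mulr_sumr; apply: eq_bigr => w _.
    by rewrite -scalerAr -mpolyXD.
  rewrite lamS; under eq_bigr => w _ do rewrite lamZ lamX.
  case: (eqVneq a 0%MM) => [a0 | an0].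
    rewrite big1_seq // => w hw; rewrite /Q a0 add0m.
    suff -> : (mdeg w == n) = false by rewrite mulr0.
    apply/negbTE/eqP => e; have := msize_mdeg_lt hw; rewrite e; move: hsg; lia.
  case: (boolP (has (fun w => Q (a + w)%MM) (msupp g))) => [/hasP [w0 hw0 hQ0] | hn]; last first.
    rewrite big1_seq // => w hw; move/hasPn: hn => /(_ w hw) /negbTE ->.
    by rewrite mulr0.
  move: hQ0; rewrite /Q => /andP [/eqP hdeg0 /decPP hre0].
  have [i hi] : mnonempty (msof a).
    apply: msz_pos_ne; first exact: kpos.
    rewrite mdeg_msof lt0n mdeg_eq0; exact: an0.
  rewrite (eq_big_seq (fun w => g@_w * (dgm w == dgm w0)%:R)).
    by rewrite -phiH_coef hg mcoeff0.
  move=> w hw; rewrite /Q.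
  suff -> : ((mdeg (a + w)%MM == n) && decP (reach ed u (msof (a + w)%MM))) =
     (dgm w == dgm w0) by [].
  apply/idP/eqP.
    move=> /andP [_ /decPP hre].
    have : sameDeg ed (msof (a + w)) (msof (a + w0)).
      by apply: reach_sameDeg; apply: reach_trans (reach_symm hre) hre0.
    move/dgm_sameDeg; rewrite !dgmD; exact: addmI.
  move=> e.
  have hsd : sameDeg ed (msof (a + w0)) (msof (a + w)).
    by apply/dgm_sameDeg; rewrite !dgmD e.
  apply/andP; split.
    apply/eqP; rewrite -mdeg_msof -(sameDeg_msz H_unif kpos hsd) mdeg_msof //.
  apply/decPP; apply: (reach_trans hre0); apply: reach_step; split => //.
  exists i; rewrite !msof_add !ffunE; move: hi; rewrite ffunE; lia.
have hf := phiH_binom huv.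
have [l [c [g [hg hfe]]]] := gen _ hf.
have : lam ('X_[mon u] - 'X_[mon v]) = 1.
  rewrite lamD -scaleN1r lamZ !lamX /Q !mdeg_mon hu eqxx /=.
  have -> : decP (reach ed u (msof (mon u))) = true.
    by apply/decPP; rewrite msof_mon; exact: rst_refl.
  have -> : decP (reach ed u (msof (mon v))) = false.
    by apply/negbTE/negP => /decPP; rewrite msof_mon.
  by rewrite andbF mulr0 addr0.
rewrite hfe lamS big1 => [|i _].
  by move/eqP; rewrite eq_sym oner_eq0.
have [hgi hgs] := hg i.
rewrite (mpolyE (c i)) mulr_suml lamS big1 // => a _.
by rewrite -scalerAl lamZ lamXg ?mulr0.
Qed.

End Alg.

Theorem theorem5p1 (K : fieldType) (m r k : nat) (ed : 'I_r -> {set 'I_m})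
  (ed_inj : injective ed) (ed_ne : nonempty_edges ed) (H_unif : uniform ed k)
  (d : nat) (d_pos : (0 < d)%N) :
  toric_generated_in_degree_le K ed d <->
  (forall (W : bms r) (n : nat),
     primitive ed W -> bsz W = n.*2 -> (d < n)%N ->
     (exists S : mset r, proper_splitting ed W S) \/ splitting_chain ed W n).
Proof.
have kpos : (0 < k)%N \/ r = 0%N.
  case: (eqVneq r 0%N) => [r0 | rn0]; [by right | left].
  have i : 'I_r by exists 0%N; rewrite lt0n.
  rewrite -(H_unif i) card_gt0; exact: ed_ne.
split.
- move=> gen W n hW hsz hdn; right.
  have hbal : sameDeg ed (blue W) (red W) := hW.1.
  have hb : msz (blue W) = n.
    move: hsz; rewrite /bsz -(sameDeg_msz H_unif kpos hbal) addnn => /eqP.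
    by rewrite -!muln2 eqn_mul2r /= => /eqP.
  apply: (chain_from_reach H_unif kpos hW hsz); first by lia.
  exact: (lhs_reach H_unif kpos gen hbal hb hdn).
- move=> HR f hf; apply: SpanL_gen_deg; exact: (kernel_span H_unif kpos HR hf).
Qed.
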